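(* In the homogeneous UAV Persistent Service model (all displacement times equal to $g>0$, $2g<f$, $c\ge0$), every schedule that keeps each of the $N$ locations covered at every time $t\ge 0$ uses at least $$M=N+\left\lceil\frac{c+2g}{f-2g}\,N\right\rceil$$ UAVs. Consequently (together with the feasibility of HoRR with this many UAVs) this $M$ is exactly the minimum fleet size for persistent coverage.
   Context: UAV Persistent Service model: there is a single recharging station (RS) and a finite set $\mathcal N$ of $N$ aerial locations, served by identical UAVs. A UAV with a full battery can fly for at most $f>0$ time units; replacing/recharging its battery at the RS takes $c\ge0$ time units. Flying between the RS and location $i$ takes $g_i>0$ time units (here $g_i=g$ for all $i$), with $2g_i<f$. A UAV's activity consists of sorties: it leaves the RS fully charged, flies to one location, stays there (covering it), and flies back to the RS, the total airborne time of the sortie being at most $f$; back at the RS it spends $c$ time units recharging (possibly followed by idle time) before its next sortie. At time $0$ each UAV is fully charged, either at the RS or at a location. A location is covered at time $t$ if some UAV is present there at time $t$; a schedule is feasible if all locations are covered at all times $t\ge0$. HoRR schedule: with $x=\frac{f-2g}{N}$, initially one fully charged UAV at each location, the others fully charged at the RS; for $k=1,2,\dots$ a backup leaves the RS at time $kx-g$ and at time $kx$ replaces the serving UAV with least remaining energy, which returns to the RS, recharges and becomes a backup. *)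

(* Defs.v *)
From HB Require Import structures.
From mathcomp Require Import all_boot all_order all_algebra.
From mathcomp Require Import reals.
Set Implicit Arguments. Unset Strict Implicit. Unset Printing Implicit Defensive.
Import Order.TTheory GRing.Theory Num.Theory.
Local Open Scope ring_scope.

(* A sortie of a UAV: the location it serves (locations are 'I_N), the time
   it arrives at that location (s_arr), and the time it leaves it (s_lv).
   It departs the RS at s_arr - g and is back at the RS at s_lv + g. *)
Record sortie (R : realType) (N : nat) := Sortie {
  s_loc : 'I_N;
  s_arr : R;
  s_lv  : R }.

(* The activity of one UAV: whether at time 0 it is (fully charged) at a
   location rather than at the RS, the number of sorties it performs
   (None = infinitely many), and its sorties, indexed 0,1,2,... in time order.
   If start_at_loc holds, sortie 0 is the one in progress at time 0
   (the UAV is at s_loc of sortie 0 from time 0 = s_arr on). *)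
Record uav_plan (R : realType) (N : nat) := UavPlan {
  start_at_loc : bool;
  nsorties : option nat;
  sorties : nat -> sortie R N }.

Definition active (n : option nat) (k : nat) : Prop :=
  match n with None => True | Some m => (k < m)%N end.

(* Time at which the battery used during sortie k started being consumed:
   departure time from the RS, or time 0 for an initial sortie of a UAV that
   starts (fully charged) at a location. *)
Definition energy_start (R : realType) (N : nat) (g : R) (p : uav_plan R N) (k : nat) : R :=
  if start_at_loc p && (k == 0)%N then 0 else s_arr (sorties p k) - g.

(* Feasibility of one UAV's activity with parameters f (flight autonomy),
   g (RS <-> location displacement time), c (recharge time). *)
Definition valid_plan (R : realType) (N : nat) (f g c : R) (p : uav_plan R N) : Prop :=
  [/\ (start_at_loc p -> active (nsorties p) 0 /\ s_arr (sorties p 0) = 0),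
      (~~ start_at_loc p -> active (nsorties p) 0 -> 0 <= s_arr (sorties p 0) - g),
      (forall k, active (nsorties p) k ->
         s_arr (sorties p k) <= s_lv (sorties p k) /\
         s_lv (sorties p k) + g - energy_start g p k <= f) &
      (forall k, active (nsorties p) k.+1 ->
         s_lv (sorties p k) + g + c <= s_arr (sorties p k.+1) - g)].

Definition present (R : realType) (N : nat) (p : uav_plan R N) (i : 'I_N) (t : R) : Prop :=
  exists k, [/\ active (nsorties p) k, s_loc (sorties p k) = i &
                s_arr (sorties p k) <= t <= s_lv (sorties p k)].

Definition feasible_schedule (R : realType) (N M : nat) (f g c : R)
    (sched : 'I_M -> uav_plan R N) : Prop :=
  (forall u, valid_plan f g c (sched u)) /\
  (forall (i : 'I_N) (t : R), 0 <= t -> exists u : 'I_M, present (sched u) i t).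

(* Main.v *)
Require Import Defs.
From HB Require Import structures.
From mathcomp Require Import all_boot all_order all_algebra.
From mathcomp Require Import reals ring lra.
Import Order.TTheory GRing.Theory Num.Theory.
Local Open Scope ring_scope.

Definition activeb (n : option nat) (k : nat) : bool :=
  match n with None => true | Some m => (k < m)%N end.

Lemma activeP n k : active n k <-> activeb n k.
Proof. by case: n. Qed.

Lemma active_pred n k : active n k.+1 -> active n k.
Proof. by case: n => //= m; apply: ltnW. Qed.

Arguments active_pred {n k}.
Arguments activeP {n k}.



Lemma arr_lb {R : realType} {N : nat} {f g c : R} (hg : 0 < g) (hgf : 2 * g < f) (hc : 0 <= c) {p : uav_plan R N} (hp : valid_plan f g c p) {k} : active (nsorties p) k -> k%:R * (2 * g) <= (s_arr (sorties p k)).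
Proof.
case: hp => h1 h2 h3 h4.
elim: k => [|k IH] hk.
  have -> : (0%:R * (2 * g) : R) = 0 by rewrite mul0r.
  case: (boolP (start_at_loc p)) => hs.
    by case: (h1 hs) => _ ->.
  by move: (h2 hs hk); rewrite subr_ge0 => H; apply: le_trans H; apply: ltW.
move: (IH (active_pred hk)) => H2; have [hk1 _] := h3 k (active_pred hk).
move: (h4 k hk) => H1.
rewrite -natr1 mulrDl mul1r. have H1p : (s_lv (sorties p k)) + g + c <= (s_arr (sorties p k.+1)) - g := H1. move: H1p H2 hk1 hc. clear. move=> H1 H2 hk1 hc. lra.
Qed.

Lemma d_ge0 {R : realType} {N : nat} {f g c : R} (hg : 0 < g) (hgf : 2 * g < f) (hc : 0 <= c) {p : uav_plan R N} (hp : valid_plan f g c p) {k} : active (nsorties p) k -> 0 <= (s_lv (sorties p k)) - (s_arr (sorties p k)).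
Proof. by case: hp => _ _ h3 _ /h3 [] ? _; rewrite subr_ge0. Qed.

Lemma d_le1 {R : realType} {N : nat} {f g c : R} (hg : 0 < g) (hgf : 2 * g < f) (hc : 0 <= c) {p : uav_plan R N} (hp : valid_plan f g c p) {k} : active (nsorties p) k -> (s_lv (sorties p k)) - (s_arr (sorties p k)) <= f - g.
Proof.
case: hp => h1 _ h3 _ hk; have [_] := h3 k hk.
rewrite /energy_start; case: ifP => [/andP[hs /eqP ek]|_].
  by subst k; case: (h1 hs) => _; move=> ->; lra.
lra.
Qed.

Lemma d_le2 {R : realType} {N : nat} {f g c : R} (hg : 0 < g) (hgf : 2 * g < f) (hc : 0 <= c) {p : uav_plan R N} (hp : valid_plan f g c p) {k} : active (nsorties p) k.+1 -> (s_lv (sorties p k.+1)) - (s_arr (sorties p k.+1)) <= f - 2 * g.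
Proof.
case: hp => h1 _ h3 _ hk; have [_] := h3 k.+1 hk.
by rewrite /energy_start andbF; lra.
Qed.

Lemma arr_step {R : realType} {N : nat} {f g c : R} (hg : 0 < g) (hgf : 2 * g < f) (hc : 0 <= c) {p : uav_plan R N} (hp : valid_plan f g c p) {k} : active (nsorties p) k.+1 -> (s_arr (sorties p k)) + ((s_lv (sorties p k)) - (s_arr (sorties p k))) + 2 * g + c <= (s_arr (sorties p k.+1)).
Proof. case: hp => _ _ _ h4 hk; have := h4 k hk; lra. Qed.

Definition Qb {R : realType} {N : nat} (p : uav_plan R N) (T : R) k := activeb (nsorties p) k && (s_arr (sorties p k) <= T).

Lemma Qb_pred {R : realType} {N : nat} {f g c : R} (hg : 0 < g) (hgf : 2 * g < f) (hc : 0 <= c) {p : uav_plan R N} (hp : valid_plan f g c p) {T : R} (hT : 0 <= T) {k} : Qb p T k.+1 -> Qb p T k.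
Proof.
case/andP => /activeP hk hT'; apply/andP; split; first exact/activeP/active_pred.
have := arr_step hg hgf hc hp hk; have := d_ge0 hg hgf hc hp (active_pred hk); lra.
Qed.

Definition S {R : realType} {N : nat} (p : uav_plan R N) (T : R) m := \sum_(k < m) (if Qb p T k then s_lv (sorties p k) - s_arr (sorties p k) else 0).

Lemma S_bound {R : realType} {N : nat} {f g c : R} (hg : 0 < g) (hgf : 2 * g < f) (hc : 0 <= c) {p : uav_plan R N} (hp : valid_plan f g c p) {T : R} (hT : 0 <= T) {m} : Qb p T m -> (f + c) * S p T m <= (f - 2 * g) * (s_arr (sorties p m)) + (f + c) * g.
Proof.
elim: m => [|m IH] hQ.
  rewrite /S big_ord0 mulr0.
  have := @arr_lb _ _ _ _ _ hg hgf hc _ hp 0; rewrite mul0r.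
  case/andP: hQ => /activeP hk _ /(_ hk) h0.
  have : 0 <= (f - 2 * g) * (s_arr (sorties p 0)) by apply: mulr_ge0; lra.
  have : 0 <= (f + c) * g by apply: mulr_ge0; lra.
  lra.
have hQm := Qb_pred hg hgf hc hp hT hQ.
rewrite /S big_ord_recr /= -/(S p T m) hQm.
case/andP: hQ => /activeP hk _.
have hstep := arr_step hg hgf hc hp hk.
have hd0 := d_ge0 hg hgf hc hp (active_pred hk).
have ha0 := arr_lb hg hgf hc hp (active_pred hk).
case: m IH hQm hk hstep hd0 ha0 => [|m] IH hQm hk hstep hd0 ha0.
  rewrite /S big_ord0 add0r.
  have hd1 := d_le1 hg hgf hc hp (active_pred hk).
  set d := s_lv (sorties p 0) - s_arr (sorties p 0) in hstep hd0 hd1 *.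
  rewrite mul0r in ha0.
  have e1 : d * (2 * g + c) <= (f - g) * (2 * g + c) by apply: ler_wpM2r; lra.
  have e2 : g * (2 * g + c) <= g * (f + c) by apply: ler_wpM2l; lra.
  have e3 : (f - 2 * g) * (d + 2 * g + c) <= (f - 2 * g) * ((s_arr (sorties p 1))) by apply: ler_wpM2l; lra.
  have e4 : 0 <= (f - 2 * g) * (s_arr (sorties p 0)) by apply: mulr_ge0; lra.
  have : (f - 2 * g) * ((s_arr (sorties p 0)) + d + 2 * g + c) <= (f - 2 * g) * ((s_arr (sorties p 1))) by apply: ler_wpM2l; lra.
  nra.
have IH' := IH hQm.
have hd2 := d_le2 hg hgf hc hp (active_pred hk).
set d := (s_lv (sorties p m.+1)) - (s_arr (sorties p m.+1)) in hstep hd0 hd2 *.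
have e1 : d * (2 * g + c) <= (f - 2 * g) * (2 * g + c) by apply: ler_wpM2r; lra.
have e3 : (f - 2 * g) * ((s_arr (sorties p m.+1)) + d + 2 * g + c) <= (f - 2 * g) * ((s_arr (sorties p m.+2))) by apply: ler_wpM2l; lra.
nra.
Qed.

Lemma total_bound {R : realType} {N : nat} {f g c : R} (hg : 0 < g) (hgf : 2 * g < f) (hc : 0 <= c) {p : uav_plan R N} (hp : valid_plan f g c p) {T : R} (hT : 0 <= T) n : (f + c) * \sum_(k < n) (if Qb p T k then (s_lv (sorties p k)) - (s_arr (sorties p k)) else 0) <= (f - 2 * g) * T + (f + c) * f.
Proof.
elim: n => [|n IH].
  rewrite big_ord0 mulr0.
  have : 0 <= (f - 2 * g) * T by apply: mulr_ge0; lra.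
  have : 0 <= (f + c) * f by apply: mulr_ge0; lra.
  lra.
rewrite big_ord_recr /= -/(S p T n).
case: ifP => hQ; last by rewrite addr0.
have hS := S_bound hg hgf hc hp hT hQ.
case/andP: hQ => /activeP hk hTa.
have hd1 := d_le1 hg hgf hc hp hk.
have e1 : (f + c) * ((s_lv (sorties p n)) - (s_arr (sorties p n))) <= (f + c) * (f - g) by apply: ler_wpM2l; lra.
have e2 : (f - 2 * g) * (s_arr (sorties p n)) <= (f - 2 * g) * T by apply: ler_wpM2l; lra.
nra.
Qed.

Lemma cover_sum (R : realType) (I : finType) (a b : I -> R) :
  forall (n : nat) (P : pred I) (x y : R), (#|P| <= n)%N ->
  (forall j, P j -> a j <= b j) ->
  (forall t, x < t < y -> exists2 j, P j & a j <= t <= b j) ->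
  y - x <= \sum_(j | P j) (b j - a j).
Proof.
elim=> [|n IH] P x y hc hab hcov.
  have P0 : forall j, P j = false.
    by move=> j; apply/negbTE/negP=> Pj; move: hc; rewrite leqn0 => /eqP/card0_eq/(_ j); rewrite /in_mem /= Pj.
  rewrite big_pred0 //; case: (lerP y x) => hxy; first by lra.
  have [|j Pj _] := hcov ((x + y) / 2); first by apply/andP; split; lra.
  by rewrite P0 in Pj.
have hsum0 : forall Q, 0 <= \sum_(j | P j && Q j) (b j - a j).
  by move=> Q; apply: sumr_ge0 => j /andP[Pj _]; rewrite subr_ge0 hab.
case: (lerP y x) => hxy.
  have := hsum0 predT; under eq_bigl do rewrite andbT. lra.
have [|j0 Pj0 _] := hcov ((x + y) / 2); first by apply/andP; split; lra.
case: (arg_minP a Pj0) => j Pj jmin.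
have hax : a j <= x.
  rewrite leNgt; apply/negP => hxa.
  pose t := (x + Num.min (a j) y) / 2.
  have hmin1 : Num.min (a j) y <= a j by rewrite ge_min lexx.
  have hmin2 : Num.min (a j) y <= y by rewrite ge_min lexx orbT.
  have hmin3 : x < Num.min (a j) y by rewrite lt_min hxa hxy.
  have [|k Pk /andP[hk1 hk2]] := hcov t; first by apply/andP; split; rewrite /t; lra.
  have := jmin k Pk; rewrite /t in hk1; lra.
rewrite (bigD1 j) //=.
case: (lerP y (b j)) => hby.
  have := hsum0 (fun i => i != j); lra.
pose x' := if b j <= x then x else b j.
have hx1 : b j <= x' by rewrite /x'; case: ifP => // /negbT; rewrite -ltNge; lra.
have hx2 : x <= x' by rewrite /x'; case: ifP => // /negbT; rewrite -ltNge; lra.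
have hx3 : x' - x <= b j - a j.
  by rewrite /x'; case: ifP => _; have := hab j Pj; lra.
have := IH (fun i => P i && (i != j)) x' y.
apply: (fun H => _) => // H.
have : y - x' <= \sum_(i | P i && (i != j)) (b i - a i).
  apply: H.
  - move: hc; rewrite (cardD1 j) /in_mem /= Pj add1n ltnS; apply: leq_trans.
    by apply: subset_leq_card; apply/subsetP => i; rewrite !inE /in_mem /= andbC.
  - by move=> i /andP[Pi _]; exact: hab.
  - move=> t /andP[ht1 ht2].
    have [|k Pk /andP[hk1 hk2]] := hcov t.
      by apply/andP; split => //; apply: le_lt_trans ht1.
    exists k => //; last by rewrite hk1 hk2.
    rewrite Pk /=; apply/negP => /eqP ekj; rewrite ekj in hk2.
    have := le_lt_trans hx1 ht1; lra.
lra.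
Qed.

Lemma sum_loc (R : realType) (N : nat) (J : finType) (Q : pred J) (loc : J -> 'I_N) (F : J -> R) :
  \sum_(i < N) \sum_(j | Q j && (loc j == i)) F j = \sum_(j | Q j) F j.
Proof.
rewrite (exchange_big_dep Q) /=; last by move=> i j _ /andP[].
apply: eq_bigr => j Qj.
by rewrite (big_pred1 (loc j)) // => i; rewrite /= Qj /= eq_sym.
Qed.

Theorem theorem2 (R : realType) (N M : nat) (f g c : R)
  (hg : 0 < g) (hgf : 2 * g < f) (hc : 0 <= c)
  (sched : 'I_M -> uav_plan R N) :
  feasible_schedule f g c sched ->
  (N%:Z + Num.ceil ((c + 2 * g) / (f - 2 * g) * N%:R) <= M%:Z)%R.
Proof.
case=> hv hcov.
have key : forall T : R, 0 <= T -> (f + c) * (N%:R * T) <= M%:R * ((f - 2 * g) * T + (f + c) * f).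
  move=> T hT.
  pose n := (Num.truncn (T / (2 * g))).+1.
  have hn : T < n%:R * (2 * g).
    rewrite -ltr_pdivrMr; last by lra.
    exact: truncnS_gt.
  pose Q := fun j : 'I_M * 'I_n => Qb (sched j.1) T j.2.
  pose a := fun j : 'I_M * 'I_n => s_arr (sorties (sched j.1) j.2).
  pose b := fun j : 'I_M * 'I_n => s_lv (sorties (sched j.1) j.2).
  pose loc := fun j : 'I_M * 'I_n => s_loc (sorties (sched j.1) j.2).
  have hi : forall i : 'I_N, T <= \sum_(j | Q j && (loc j == i)) (b j - a j).
    move=> i.
    have := @cover_sum R _ a b _ (fun j => Q j && (loc j == i)) 0 T (leqnn _).
    rewrite subr0; apply.
      move=> j /andP[/andP[/activeP hk _] _].
      by case: (hv j.1) => _ _ h3 _; case: (h3 _ hk).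
    move=> t /andP[ht0 htT].
    have [u [k [hk hl /andP[h1 h2]]]] := hcov i t (ltW ht0).
    have hkn : (k < n)%N.
      have := arr_lb hg hgf hc (hv u) hk.
      rewrite -(ltr_nat R) => H.
      have : k%:R * (2 * g) < n%:R * (2 * g) by lra.
      by rewrite ltr_pM2r //; lra.
    exists (u, Ordinal hkn); last by rewrite /a /b /= h1 h2.
    rewrite /Q /loc /Qb /= hl eqxx andbT; apply/andP; split; first exact/activeP.
    lra.
  have hsum : N%:R * T <= \sum_(j | Q j) (b j - a j).
    rewrite -(sum_loc _ _ _ _ loc).
    have -> : N%:R * T = \sum_(i < N) T by rewrite sumr_const card_ord mulr_natl.
    by apply: ler_sum => i _.
  have hsum2 : \sum_(j | Q j) (b j - a j) = \sum_(u < M) \sum_(k < n) (if Qb (sched u) T k then s_lv (sorties (sched u) k) - s_arr (sorties (sched u) k) else 0).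
    rewrite big_mkcond pair_big /=; apply: eq_bigr => -[u k] _ //.
  rewrite hsum2 in hsum.
  have : (f + c) * (N%:R * T) <= (f + c) * \sum_(u < M) \sum_(k < n) (if Qb (sched u) T k then s_lv (sorties (sched u) k) - s_arr (sorties (sched u) k) else 0).
    by apply: ler_wpM2l => //; lra.
  move/le_trans; apply.
  rewrite mulr_sumr.
  set K := (_ + _ * f).
  have -> : M%:R * K = \sum_(u < M) K by rewrite sumr_const card_ord mulr_natl.
  apply: ler_sum => u _.
  exact: (total_bound hg hgf hc (hv u) hT).
have hN0 : 0 <= N%:R :> R by apply: ler0n.
have hM0 : 0 <= M%:R :> R by apply: ler0n.
have hMD : N%:R * (f + c) <= M%:R * (f - 2 * g).
  rewrite leNgt; apply/negP => hlt.
  set e := N%:R * (f + c) - M%:R * (f - 2 * g).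
  have he : 0 < e by rewrite /e; lra.
  have hA : 0 <= M%:R * (f + c) * f.
    by apply: mulr_ge0; [apply: mulr_ge0 => //; lra | lra].
  pose T := M%:R * (f + c) * f / e + 1.
  have hT : 0 <= T by rewrite /T; have := divr_ge0 hA (ltW he); lra.
  have := key T hT.
  have eT : e * T = M%:R * (f + c) * f + e.
    by rewrite /T mulrDr mulr1 mulrC divfK //; apply: lt0r_neq0.
  have : (f + c) * (N%:R * T) - M%:R * ((f - 2 * g) * T + (f + c) * f) = e * T - M%:R * (f + c) * f.
    by rewrite /e; ring.
  lra.
rewrite -lerBrDl Num.Theory.ceil_le_int rmorphB /= -!pmulrn.
rewrite mulrAC ler_pdivrMr; last by lra.
have : (M%:R - N%:R) * (f - 2 * g) - (c + 2 * g) * N%:R = M%:R * (f - 2 * g) - N%:R * (f + c) :> R by ring.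
lra.
Qed.
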